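(* Let $s,t\in(0,\pi)$ with $s\ne t$, so that $P=(\cos t,\sin t)$ and $Q=(\cos s,\sin s)$ are two distinct points of the unit circle in the half-plane $y>0$. Consider $$f(u)=\frac{1}{\sqrt{\sin(t+u)}}+\frac{1}{\sqrt{\sin(s+u)}},$$ defined for all $u$ with $\sin(t+u)>0$ and $\sin(s+u)>0$. Then on the interval of definition $I=(-\min(s,t),\ \pi-\max(s,t))$ (which contains $0$), $f$ attains its minimum at $u_{\min}=\frac{\pi}{2}-\frac{s+t}{2}$ (the rotation by angle $u_{\min}$ takes $P,Q$ to points forming a segment parallel to the $x$-axis); $u_{\min}$ is the only critical point of $f$ on $I$, and $f$ is decreasing as $u$ increases in $I$ while $u<u_{\min}$. *)

(* Defs.v *)
From Stdlib Require Import Reals.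
From Coquelicot Require Import Coquelicot.
Open Scope R_scope.

Definition fst_fun (s t u : R) : R :=
  / sqrt (sin (t + u)) + / sqrt (sin (s + u)).

Definition inIdom (s t u : R) : Prop :=
  - Rmin s t < u /\ u < PI - Rmax s t.

Definition u_min (s t : R) : R := PI / 2 - (s + t) / 2.

(* Main.v *)
Require Import Defs.
From Stdlib Require Import Reals.
From Coquelicot Require Import Coquelicot.
From Stdlib Require Import Lra.
Open Scope R_scope.

Definition h (x : R) := cos x / (sin x * sqrt (sin x)).

Lemma deriv s t u : 0 < sin (t+u) -> 0 < sin (s+u) ->
  is_derive (fst_fun s t) u (-(h (t+u) + h (s+u))/2).
Proof.
intros H1 H2. unfold fst_fun.
assert (Q1 := sqrt_lt_R0 _ H1). assert (Q2 := sqrt_lt_R0 _ H2).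
auto_derive.
- repeat split; auto; lra.
- rewrite !sqrt_sqrt by lra. unfold h. field. lra.
Qed.

Lemma divlt x c A B : 0 < c < x -> 0 < A < B -> c / B < x / A.
Proof.
intros [Hc Hx] [HA HB].
apply Rlt_trans with (c / A).
- unfold Rdiv. apply Rmult_lt_compat_l; auto. apply Rinv_lt_contravar; auto.
  apply Rmult_lt_0_compat; lra.
- unfold Rdiv. apply Rmult_lt_compat_r; auto. apply Rinv_0_lt_compat; auto.
Qed.

Lemma den_pos x : 0 < x < PI -> 0 < sin x * sqrt (sin x).
Proof.
intros H. assert (H1 := sin_gt_0 x (proj1 H) (proj2 H)).
apply Rmult_lt_0_compat; auto. apply sqrt_lt_R0; auto.
Qed.

Lemma h_nonneg x : 0 < x < PI -> 0 <= cos x -> 0 <= h x.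
Proof.
intros H Hc. unfold h, Rdiv. apply Rmult_le_pos; auto.
left. apply Rinv_0_lt_compat. apply den_pos; auto.
Qed.

Lemma h_pos x : 0 < x < PI -> 0 < cos x -> 0 < h x.
Proof.
intros H Hc. unfold h, Rdiv. apply Rmult_lt_0_compat; auto.
apply Rinv_0_lt_compat. apply den_pos; auto.
Qed.

Lemma h_PI x : h (PI - x) = - h x.
Proof.
unfold h. rewrite sin_PI_x, Rtrigo_facts.cos_pi_minus. unfold Rdiv. ring.
Qed.

Lemma key_a a b : 0 < a < PI -> 0 < b < PI -> a + b < PI -> a < PI / 2 ->
  0 < h a + h b.
Proof.
intros Ha Hb Hab Ha2.
assert (Ca : 0 < cos a) by (apply cos_gt_0; lra).
destruct (Rle_dec 0 (cos b)) as [Cb|Cb].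
- assert (0 < h a) by (apply h_pos; auto). assert (0 <= h b) by (apply h_nonneg; auto). lra.
- assert (Hb2 : PI / 2 <= b).
  { destruct (Rle_dec (PI/2) b); auto. exfalso. apply Cb. left. apply cos_gt_0; lra. }
  assert (C1 : cos (PI - b) < cos a) by (apply cos_decreasing_1; lra).
  rewrite Rtrigo_facts.cos_pi_minus in C1.
  assert (S1 : sin a < sin (PI - b)) by (apply sin_increasing_1; lra).
  rewrite sin_PI_x in S1.
  assert (sa := sin_gt_0 a ltac:(lra) ltac:(lra)).
  assert (sb := sin_gt_0 b ltac:(lra) ltac:(lra)).
  assert (Q : sqrt (sin a) < sqrt (sin b)) by (apply sqrt_lt_1; lra).
  assert (Qa := sqrt_lt_R0 _ sa).
  assert (D : sin a * sqrt (sin a) < sin b * sqrt (sin b)).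
  { apply Rmult_le_0_lt_compat; lra. }
  assert (L : - cos b / (sin b * sqrt (sin b)) < cos a / (sin a * sqrt (sin a))).
  { apply divlt. lra. split; auto. apply den_pos; auto. }
  unfold h. unfold Rdiv in *. lra.
Qed.

Lemma hpos a b : 0 < a < PI -> 0 < b < PI -> a + b < PI -> 0 < h a + h b.
Proof.
intros Ha Hb Hab.
destruct (Rlt_dec a (PI/2)).
- apply key_a; auto.
- rewrite Rplus_comm. apply key_a; auto; lra.
Qed.

Lemma hneg a b : 0 < a < PI -> 0 < b < PI -> PI < a + b -> h a + h b < 0.
Proof.
intros Ha Hb Hab.
assert (H := hpos (PI - a) (PI - b) ltac:(lra) ltac:(lra) ltac:(lra)).
rewrite !h_PI in H. lra.
Qed.

Lemma hzero a b : a + b = PI -> h a + h b = 0.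
Proof.
intros H. replace b with (PI - a) by lra. rewrite h_PI. ring.
Qed.

Lemma inI s t u : 0 < s < PI -> 0 < t < PI ->
  (inIdom s t u <-> (0 < t + u < PI /\ 0 < s + u < PI)).
Proof.
intros hs ht. unfold inIdom, Rmin, Rmax.
destruct (Rle_dec s t); split; intros; lra.
Qed.

Definition D s t u := h (t + u) + h (s + u).

Lemma Dsign_le s t u : 0 < s < PI -> 0 < t < PI -> inIdom s t u -> u <= u_min s t -> 0 <= D s t u.
Proof.
intros hs ht Hu Hm. apply inI in Hu; auto. unfold u_min in Hm. unfold D.
destruct Hm as [Hm|Hm].
- left. apply hpos; lra.
- right. symmetry. apply hzero. lra.
Qed.

Lemma Dsign_ge s t u : 0 < s < PI -> 0 < t < PI -> inIdom s t u -> u_min s t <= u -> D s t u <= 0.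
Proof.
intros hs ht Hu Hm. apply inI in Hu; auto. unfold u_min in Hm. unfold D.
destruct Hm as [Hm|Hm].
- left. apply hneg; lra.
- right. apply hzero. lra.
Qed.

Lemma derivI s t u : 0 < s < PI -> 0 < t < PI -> inIdom s t u ->
  is_derive (fst_fun s t) u (- D s t u / 2).
Proof.
intros hs ht Hu. apply inI in Hu; auto. apply deriv; apply sin_gt_0; lra.
Qed.

Lemma contI s t u : 0 < s < PI -> 0 < t < PI -> inIdom s t u -> continuity_pt (fst_fun s t) u.
Proof.
intros hs ht Hu. apply continuity_pt_filterlim.
apply (ex_derive_continuous (V := R_NormedModule) (fst_fun s t) u). eexists. apply derivI; eauto.
Qed.

Lemma MVT_I s t u v : 0 < s < PI -> 0 < t < PI -> inIdom s t u -> inIdom s t v -> u < v ->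
  exists c, u <= c <= v /\ inIdom s t c /\
    fst_fun s t v - fst_fun s t u = (- D s t c / 2) * (v - u).
Proof.
intros hs ht Hu Hv Huv.
assert (Hc : forall c, u <= c <= v -> inIdom s t c).
{ intros c Hc. unfold inIdom in *. lra. }
destruct (MVT_gen (fst_fun s t) u v (fun c => - D s t c / 2)) as [c [Hc1 Hc2]].
- intros x Hx. rewrite Rmin_left, Rmax_right in Hx by lra. apply derivI; auto. apply Hc; lra.
- intros x Hx. rewrite Rmin_left, Rmax_right in Hx by lra. apply contI; auto.
- rewrite Rmin_left, Rmax_right in Hc1 by lra. exists c. split; auto.
Qed.

Theorem lemma1 (s t : R) (hs : 0 < s < PI) (ht : 0 < t < PI) (hst : s <> t) :
  (* the interval of definition I contains 0 *)
  inIdom s t 0 /\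
  (* f attains its minimum on I at umin *)
  inIdom s t (u_min s t) /\
  (forall u, inIdom s t u -> fst_fun s t (u_min s t) <= fst_fun s t u) /\
  (* umin is the only critical point of f on I *)
  (forall u, inIdom s t u -> (is_derive (fst_fun s t) u 0 <-> u = u_min s t)) /\
  (* f is (strictly) decreasing on I to the left of umin *)
  (forall u v, inIdom s t u -> inIdom s t v -> u < v -> v < u_min s t ->
     fst_fun s t v < fst_fun s t u).
Proof.
assert (Hm : inIdom s t (u_min s t)).
{ apply inI; auto. unfold u_min. lra. }
split; [apply inI; auto; lra|].
split; [exact Hm|].
split.
{ intros u Hu. destruct (Rtotal_order u (u_min s t)) as [H|[H|H]].
  - destruct (MVT_I s t u (u_min s t)) as [c [Hc1 [Hc2 Hc3]]]; auto.
    assert (0 <= D s t c) by (apply Dsign_le; auto; lra).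
    assert (0 <= D s t c * (u_min s t - u)) by (apply Rmult_le_pos; lra).
    lra.
  - subst; lra.
  - destruct (MVT_I s t (u_min s t) u) as [c [Hc1 [Hc2 Hc3]]]; auto.
    assert (D s t c <= 0) by (apply Dsign_ge; auto; lra).
    assert (0 <= - D s t c * (u - u_min s t)) by (apply Rmult_le_pos; lra).
    lra. }
split.
{ intros u Hu. split.
  - intros Hd. apply is_derive_unique in Hd.
    rewrite (is_derive_unique _ _ _ (derivI s t u hs ht Hu)) in Hd.
    apply inI in Hu; auto.
    destruct (Rtotal_order u (u_min s t)) as [H|[H|H]]; auto; unfold u_min in H; exfalso.
    + assert (0 < D s t u) by (apply hpos; lra). lra.
    + assert (D s t u < 0) by (apply hneg; lra). lra.
  - intros ->. replace 0 with (- D s t (u_min s t) / 2).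
    + apply derivI; auto.
    + unfold D. rewrite hzero. field. unfold u_min. lra. }
intros u v Hu Hv Huv Hvm.
destruct (MVT_I s t u v) as [c [Hc1 [Hc2 Hc3]]]; auto.
apply inI in Hc2; auto.
assert (0 < D s t c) by (apply hpos; unfold u_min in Hvm; lra).
assert (0 < D s t c * (v - u)) by (apply Rmult_lt_0_compat; lra).
lra.
Qed.
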